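(* Let $(X,d)$ be a metric space. Then $X$ is complete if and only if $(F_{USCG}(X),H_{\rm end})$ is complete.
   Context: A fuzzy set on $X$ is a function $u:X\to[0,1]$, with $\alpha$-cuts $[u]_\alpha=\{x: u(x)\ge\alpha\}$ for $\alpha\in(0,1]$ and $[u]_0=\overline{\{u>0\}}$. $F_{USC}(X)$ is the set of fuzzy sets with all $\alpha$-cuts ($\alpha\in[0,1]$) non-empty and closed; $F_{USCG}(X)=\{u\in F_{USC}(X): [u]_\alpha\text{ compact for all }\alpha\in(0,1]\}$. $X\times[0,1]$ is metrized by $\overline{d}((x,\alpha),(y,\beta))=d(x,y)+|\alpha-\beta|$; ${\rm end}\,u=\{(x,t)\in X\times[0,1]: u(x)\ge t\}$; $H_{\rm end}(u,v)=H({\rm end}\,u,{\rm end}\,v)$ where $H$ is the Hausdorff distance $H(A,B)=\max\{\sup_{a\in A}\inf_{b\in B}\overline{d}(a,b),\sup_{b\in B}\inf_{a\in A}\overline{d}(a,b)\}$. *)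

(* Defs.v *)
From HB Require Import structures.
From mathcomp Require Import all_boot all_order all_algebra.
From mathcomp Require Import all_classical all_reals all_analysis.
Set Implicit Arguments. Unset Strict Implicit. Unset Printing Implicit Defensive.
Import Order.TTheory GRing.Theory Num.Theory.
Import numFieldNormedType.Exports.
Local Open Scope classical_set_scope.
Local Open Scope ring_scope.

Section Fuzzy.
Context {R : realType} {X : metricType R}.

Definition d : X -> X -> R := @mdist R X.

(* alpha-cuts of a fuzzy set u : X -> [0,1] (values in R, range checked in FUSC) *)
Definition cut (u : X -> R) (a : R) : set X :=
  if a == 0 then closure [set x | 0 < u x] else [set x | a <= u x].

Definition FUSC : set (X -> R) :=
  [set u | (forall x, 0 <= u x <= 1) /\
           (forall a, 0 <= a <= 1 -> cut u a !=set0 /\ closed (cut u a))].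

Definition FUSCG : set (X -> R) :=
  [set u | FUSC u /\ (forall a, 0 < a <= 1 -> compact (cut u a))].

Definition dbar (p q : X * R) : R := d p.1 q.1 + `|p.2 - q.2|.

Definition endo (u : X -> R) : set (X * R) :=
  [set p | 0 <= p.2 <= 1 /\ p.2 <= u p.1].

End Fuzzy.

Definition hausdorff {R : realType} {T : Type} (D : T -> T -> R)
  (A B : set T) : R :=
  Num.max (sup [set inf [set D a b | b in B] | a in A])
          (sup [set inf [set D a b | a in A] | b in B]).

Definition Hend {R : realType} {X : metricType R} (u v : X -> R) : R :=
  hausdorff (@dbar R X) (endo u) (endo v).

Definition seq_complete {R : realType} {T : Type} (S : set T)
  (D : T -> T -> R) : Prop :=
  forall u : nat -> T, (forall n, S (u n)) ->
  (forall e : R, 0 < e -> exists N : nat, forall m n : nat,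
       (N <= m)%N -> (N <= n)%N -> D (u m) (u n) < e) ->
  exists l : T, S l /\
    (forall e : R, 0 < e -> exists N : nat, forall n : nat,
       (N <= n)%N -> D (u n) l < e).

(* Main.v *)
Require Import Defs.
From HB Require Import structures.
From mathcomp Require Import all_boot all_order all_algebra.
From mathcomp Require Import all_classical all_reals all_analysis.
From mathcomp Require Import ring lra.
Set Implicit Arguments. Unset Strict Implicit. Unset Printing Implicit Defensive.
Import Order.TTheory GRing.Theory Num.Theory.
Import numFieldNormedType.Exports.
Local Open Scope classical_set_scope.
Local Open Scope ring_scope.

Section Basics.
Context {R : realType} {X : metricType R}.
Implicit Types (x y z : X) (p q r : X * R) (u v : X -> R).

Lemma d_sym x y : d x y = d y x.
Proof. exact: metric_sym. Qed.
Lemma d_tri x y z : d x z <= d x y + d y z.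
Proof. exact: metric_triangle. Qed.
Lemma d_ge0 x y : 0 <= d x y.
Proof. exact: mdist_ge0. Qed.
Lemma dxx x : d x x = 0.
Proof. exact: mdistxx. Qed.

Lemma dbar_tri p q r : dbar p r <= dbar p q + dbar q r.
Proof.
rewrite /dbar addrACA lerD//; first exact: d_tri.
exact: ler_distD.
Qed.
Lemma dbar_sym p q : dbar p q = dbar q p.
Proof. by rewrite /dbar d_sym distrC. Qed.
Lemma dbar_ge0 p q : 0 <= dbar p q.
Proof. by rewrite /dbar addr_ge0// d_ge0. Qed.
Lemma d_le_dbar p q : d p.1 q.1 <= dbar p q.
Proof. by rewrite /dbar lerDl. Qed.
Lemma dist2_le_dbar p q : `|p.2 - q.2| <= dbar p q.
Proof. by rewrite /dbar lerDr d_ge0. Qed.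

Lemma endo0 v x : 0 <= v x -> endo v (x, 0).
Proof. by move=> h; rewrite /endo /= lexx ler01. Qed.

Section Side.
Variables (A B : set (X * R)) (D : X * R -> X * R -> R).
Hypotheses (D0 : forall a b, 0 <= D a b)
  (AB : forall a, A a -> exists2 b, B b & D a b <= 1).

Let S := [set inf [set D a b | b in B] | a in A].

Lemma S_ub : has_ubound S.
Proof.
exists 1 => _ [a Aa <-]; have [b Bb Dab] := AB Aa.
apply: le_trans Dab; apply: ge_inf; last by exists b.
by exists 0 => _ [c _ <-].
Qed.

Lemma side_lt e : sup S < e -> forall a, A a -> exists2 b, B b & D a b < e.
Proof.
move=> Se a Aa.
have : inf [set D a b | b in B] < e.
  apply: le_lt_trans Se; apply: sup_upper_bound; last by exists a.
  by split; [exists (inf [set D a b | b in B]), a|exact: S_ub].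
have [b Bb _] := AB Aa.
move=> /inf_lt [|_ [c Bc <-] ce]; first by exists (D a b), b.
by exists c.
Qed.

Lemma side_le e : 0 <= e -> (forall a, A a -> exists2 b, B b & D a b <= e) ->
  sup S <= e.
Proof.
move=> e0 h; have [Sn|] := pselect (S !=set0); last first.
  by move=> /set0P/negP/negbNE/eqP ->; rewrite sup0.
apply: ge_sup => // _ [a Aa <-]; have [b Bb Dab] := h a Aa.
apply: le_trans Dab; apply: ge_inf; last by exists b.
by exists 0 => _ [c _ <-].
Qed.
End Side.

Lemma endo_01 u p : endo u p -> 0 <= p.2 <= 1.
Proof. by case. Qed.

Lemma endo_near u v p : (forall x, 0 <= v x) -> endo u p ->
  exists2 q, endo v q & dbar p q <= 1.
Proof.
move=> v0 [/andP[p0 p1] _]; exists (p.1, 0); first exact: endo0.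
by rewrite /dbar /= dxx add0r subr0 ger0_norm.
Qed.

Lemma Hend_lt u v e : (forall x, 0 <= u x) -> (forall x, 0 <= v x) ->
  Hend u v < e ->
  (forall p, endo u p -> exists2 q, endo v q & dbar p q < e) /\
  (forall q, endo v q -> exists2 p, endo u p & dbar p q < e).
Proof.
move=> u0 v0; rewrite /Hend /hausdorff gt_max => /andP[h1 h2]; split.
  apply: (side_lt _ _ h1) => //; [exact: dbar_ge0|].
  by move=> a; apply: endo_near.
apply: (@side_lt (endo v) (endo u) (fun b a => dbar a b) _ _ e h2).
  by move=> *; exact: dbar_ge0.
by move=> a /(endo_near u0) [b ? ?]; exists b; rewrite // dbar_sym.
Qed.

Lemma Hend_le u v e : (forall x, 0 <= u x) -> (forall x, 0 <= v x) -> 0 <= e ->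
  (forall p, endo u p -> exists2 q, endo v q & dbar p q <= e) ->
  (forall q, endo v q -> exists2 p, endo u p & dbar p q <= e) ->
  Hend u v <= e.
Proof.
move=> u0 v0 e0 h1 h2; rewrite /Hend /hausdorff ge_max; apply/andP; split.
  by apply: side_le => //; exact: dbar_ge0.
apply: (@side_le (endo v) (endo u) (fun b a => dbar a b)) => //.
by move=> *; exact: dbar_ge0.
Qed.
End Basics.

Section Geo.
Context {R : realType}.
Variable c : R.
Hypothesis c0 : 0 < c.
Definition g (n : nat) : R := c / 2 ^+ n.

Lemma g_gt0 n : 0 < g n.
Proof. by rewrite /g divr_gt0// exprn_gt0. Qed.
Lemma gS n : g n = g n.+1 + g n.+1.
Proof. rewrite /g exprS; field. by rewrite expf_neq0. Qed.
Lemma g0 : g 0 = c.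
Proof. by rewrite /g expr0 divr1. Qed.
Lemma g_le n j : g (n + j) <= g n.
Proof.
elim: j => [|j IH]; first by rewrite addn0.
by rewrite addnS; apply: le_trans IH; rewrite [leRHS]gS lerDr ltW// g_gt0.
Qed.
Lemma g_small e : 0 < e -> exists k, g k < e.
Proof.
move=> e0; have ce : 0 <= c / e by rewrite divr_ge0// ltW.
exists (Num.Def.archi_bound (c / e)).
have h := archi_boundP ce.
have h2 : (Num.Def.archi_bound (c / e))%:R <= 2 ^+ Num.Def.archi_bound (c / e) :> R.
  by rewrite -natrX ler_nat ltnW// ltn_expl.
have := lt_le_trans h h2; rewrite /g ltr_pdivrMr// ?exprn_gt0//.
by rewrite ltr_pdivrMr// mulrC.
Qed.
End Geo.

Fixpoint mono_up (f : nat -> nat) (k : nat) : nat :=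
  if k is k'.+1 then maxn (mono_up f k').+1 (f k) else f 0%N.

Lemma mono_up_ge f k : (f k <= mono_up f k)%N.
Proof. by case: k => //= k; rewrite leq_maxr. Qed.
Lemma mono_up_S f k : (mono_up f k < mono_up f k.+1)%N.
Proof. by rewrite /= leq_maxl. Qed.
Lemma mono_up_k f k : (k <= mono_up f k)%N.
Proof.
elim: k => // k IH; apply: leq_ltn_trans (mono_up_S f k); exact: IH.
Qed.

Section Dir1.
Context {R : realType} {X : metricType R}.
Variable U : nat -> X -> R.
Hypothesis UF : forall n, FUSCG (U n).
Hypothesis UC : forall e : R, 0 < e -> exists N : nat, forall m n : nat,
  (N <= m)%N -> (N <= n)%N -> Hend (U m) (U n) < e.

Lemma U01 n x : 0 <= U n x <= 1. Proof. by case: (UF n) => [[h _] _]. Qed.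
Lemma U0 n x : 0 <= U n x. Proof. by case/andP: (U01 n x). Qed.

Lemma Ucl e : 0 < e -> exists N, forall m n, (N <= m)%N -> (N <= n)%N ->
  forall p, endo (U m) p -> exists2 q, endo (U n) q & dbar p q < e.
Proof.
move=> e0; have [N hN] := UC e0; exists N => m n Nm Nn.
by have [] := Hend_lt (@U0 m) (@U0 n) (hN m n Nm Nn).
Qed.

Definition Aset : set (X * R) := fun p => 0 <= p.2 <= 1 /\
  forall e, 0 < e -> forall N, exists n, (N <= n)%N /\
    exists2 q, endo (U n) q & dbar p q < e.

Lemma dbarxx (p : X * R) : dbar p p = 0.
Proof. by rewrite /dbar dxx subrr normr0 addr0. Qed.

Lemma A0 x : Aset (x, 0).
Proof.
split; first by rewrite lexx ler01.
move=> e e0 N; exists N; split => //; exists (x, 0); last by rewrite dbarxx.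
exact/endo0/U0.
Qed.

Lemma A_closed p : 0 <= p.2 <= 1 ->
  (forall e, 0 < e -> exists2 p', Aset p' & dbar p p' < e) -> Aset p.
Proof.
move=> p01 h; split => // e e0 N.
have e20 : 0 < e / 2 by rewrite divr_gt0.
have [p' [_ Ap'] dp'] := h _ e20.
have [n [Nn [q qe dq]]] := Ap' _ e20 N.
exists n; split => //; exists q => //.
apply: le_lt_trans (dbar_tri p p' q) _.
by rewrite [e]splitr ltrD.
Qed.

Lemma A_down x t t' : Aset (x, t) -> 0 <= t' <= t -> Aset (x, t').
Proof.
move=> [/andP[t0 t1] h] /andP[t'0 t't]; split.
  by rewrite t'0 (le_trans t't t1).
move=> e e0 N; have [n [Nn [[z r] [/andP[/= r0 r1] rU] dq]]] := h e e0 N.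
exists n; split => //; exists (z, Num.min r t').
  rewrite /endo /=; split; last by rewrite ge_min rU.
  by rewrite le_min r0 t'0 ge_min r1.
apply: le_lt_trans dq; rewrite /dbar /= lerD2l.
have [rt|tr] := leP r t'.
  by rewrite !ger0_norm ?subr_ge0 ?lerB// (le_trans rt).
by rewrite subrr normr0.
Qed.

Definition ulim (x : X) : R := sup [set t | Aset (x, t)].

Lemma ulim_has_sup x : has_sup [set t | Aset (x, t)].
Proof.
split; first by exists 0; exact: A0.
by exists 1 => t [/andP[_ ]].
Qed.

Lemma ulim_ub x t : Aset (x, t) -> t <= ulim x.
Proof. by move=> h; apply: sup_upper_bound; [exact: ulim_has_sup|]. Qed.

Lemma ulim01 x : 0 <= ulim x <= 1.
Proof.
rewrite ulim_ub; last exact: A0.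
by apply: ge_sup; [exists 0; exact: A0|move=> t [/andP[_]]].
Qed.

Lemma ulim_in x : Aset (x, ulim x).
Proof.
apply: A_closed; first exact: ulim01.
move=> e e0; have [t At lt] := sup_adherent e0 (ulim_has_sup x).
exists (x, t) => //; rewrite /dbar /= dxx add0r.
have := ulim_ub At; rewrite -/(ulim x) in lt *.
by move=> h; rewrite ger0_norm ?subr_ge0// ltrBlDr -ltrBlDl.
Qed.

Lemma endoE p : endo ulim p <-> Aset p.
Proof.
case: p => x t; split.
  by move=> [t01 tu]; apply: A_down (ulim_in x) _; case/andP: t01 => -> _.
move=> At; split; first by case: At.
exact: ulim_ub.
Qed.

Hypothesis Xc : seq_complete [set: X] (@d R X).

Lemma LL eps : 0 < eps -> exists N, forall n, (N <= n)%N ->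
  forall q, endo (U n) q -> exists2 p, Aset p & dbar q p <= eps.
Proof.
move=> e0; pose c := eps / 2; have c0 : 0 < c by rewrite divr_gt0.
have hk : forall k, exists N, forall m n, (N <= m)%N -> (N <= n)%N ->
    forall p, endo (U m) p -> exists2 q, endo (U n) q & dbar p q < g c k.+1.
  by move=> k; apply: Ucl; exact: g_gt0.
have [Nf hNf] := choice hk.
pose M := mono_up Nf.
exists (M 0%N) => n Nn q qe.
pose idx k := if k is k'.+1 then M k else n.
have idx_ge : forall k, (Nf k <= idx k)%N.
  by case=> [|k] //; exact: mono_up_ge.
have idx_S : forall k, (Nf k <= idx k.+1)%N.
  move=> k; apply: leq_trans (mono_up_ge Nf k) _; exact/ltnW/mono_up_S.
have idx_k : forall k, (k <= idx k)%N by case=> // k; exact: mono_up_k.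
have step : forall k p, exists p', endo (U (idx k)) p ->
    endo (U (idx k.+1)) p' /\ dbar p p' < g c k.+1.
  move=> k p; case: (pselect (endo (U (idx k)) p)) => h; last by exists p.
  have [p' ? ?] := hNf k (idx k) (idx k.+1) (idx_ge k) (idx_S k) p h.
  by exists p'.
have step' : forall k, exists f : X * R -> X * R, forall p,
    endo (U (idx k)) p -> endo (U (idx k.+1)) (f p) /\ dbar p (f p) < g c k.+1.
  by move=> k; have [f hf] := choice (step k); exists f.
have [sf hsf] := choice step'.
pose P := fix P k := if k is k'.+1 then sf k' (P k') else q.
have PE : forall k, endo (U (idx k)) (P k).
  by elim=> [|k IH] //=; have [] := hsf k (P k) IH.
have Pd : forall k, dbar (P k) (P k.+1) < g c k.+1.
  by move=> k; have [] := hsf k (P k) (PE k).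
have Pg : forall k j, dbar (P k) (P (k + j)%N) <= g c k - g c (k + j)%N.
  move=> k; elim=> [|j IH]; first by rewrite addn0 dbarxx subrr.
  rewrite addnS; apply: le_trans (dbar_tri _ (P (k + j)%N) _) _.
  have := Pd (k + j)%N; have := gS c (k + j)%N; lra.
pose x k := (P k).1.
have xC : forall e, 0 < e -> exists N, forall m n, (N <= m)%N -> (N <= n)%N ->
    d (x m) (x n) < e.
  move=> e ep; have [K hK] := g_small c0 ep; exists K.
  have hmn : forall m n, (K <= m)%N -> (m <= n)%N -> d (x m) (x n) < e.
    move=> m n' Km mn; rewrite -(subnKC mn).
    apply: le_lt_trans (d_le_dbar _ _) _; apply: le_lt_trans (Pg _ _) _.
    apply: le_lt_trans hK.
    have := g_gt0 c0 (m + (n' - m))%N; have := g_le c0 K (m - K).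
    rewrite (subnKC Km); lra.
  move=> m n' Km Kn; have [mn|nm] := leqP m n'; first exact: hmn.
  by rewrite d_sym; apply: hmn => //; exact: ltnW.
have [y [_ yl]] := Xc (fun _ => I) xC.
pose t0 := q.2; pose s := Num.max 0 (t0 - c).
have P01 : forall k, 0 <= (P k).2 <= 1 by move=> k; case: (PE k).
have hs : forall k, s <= (P k).2.
  move=> k; rewrite ge_max; case/andP: (P01 k) => -> _ /=.
  have := Pg 0%N k; rewrite add0n g0 => h1.
  have := g_gt0 c0 k => h2.
  have := dist2_le_dbar (P 0%N) (P k); rewrite ler_norml => /andP[h3 h4].
  rewrite /t0; have -> : q = P 0%N by []; lra.
exists (y, s).
  split.
    rewrite le_max lexx /=; apply: le_trans (hs 0%N) _.
    by case/andP: (P01 0%N).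
  move=> e ep N; have [K hK] := yl e ep; pose k := maxn K N.
  exists (idx k); split; first by apply: leq_trans (idx_k k); rewrite leq_maxr.
  exists (x k, s).
    case: (PE k) => /andP[_ h1] h2; split => /=; last exact: le_trans (hs k) h2.
    by rewrite le_max lexx (le_trans (hs k) h1).
  rewrite /dbar /= subrr normr0 addr0 d_sym; apply: hK; exact: leq_maxl.
rewrite /dbar /= [eps]splitr -/c; apply: lerD.
  apply/ler_addgt0Pr => e ep; have [K hK] := yl e ep.
  apply: le_trans (d_tri _ (x K) _) _; apply: lerD; last exact/ltW/hK.
  apply: le_trans (d_le_dbar _ _) _; have := Pg 0%N K; rewrite add0n g0.
  have := g_gt0 c0 K; have -> : q = P 0%N by []; rewrite /x; lra.
have h1 : t0 - c <= s by rewrite le_max lexx orbT.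
have h2 : s <= t0 by have := hs 0%N.
by rewrite -/t0 ger0_norm; lra.
Qed.

Lemma ulim0 x : 0 <= ulim x. Proof. by case/andP: (ulim01 x). Qed.

Lemma Hconv e : 0 < e -> exists N, forall n, (N <= n)%N -> Hend (U n) ulim < e.
Proof.
move=> e0; have e4 : 0 < e / 4 by rewrite divr_gt0.
have e2 : 0 < e / 2 by rewrite divr_gt0.
have [N1 hN1] := Ucl e4; have [N2 hN2] := LL e2.
exists (maxn N1 N2) => n; rewrite geq_max => /andP[n1 n2].
apply: le_lt_trans (_ : e / 2 < e); last by rewrite ltr_pdivrMr// ltr_pMr// ltr1n.
apply: Hend_le; [exact: U0|exact: ulim0|exact: ltW|..].
  move=> p pe; have [p' Ap' dp'] := hN2 n n2 p pe.
  by exists p' => //; apply/endoE.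
move=> q /endoE [_ Aq]; have [m [m1 [r re dr]]] := Aq _ e4 N1.
have [r' r'e dr'] := hN1 m n m1 n1 r re.
exists r' => //; rewrite dbar_sym; apply: ltW.
apply: le_lt_trans (dbar_tri q r r') _.
have -> : e / 2 = e / 4 + e / 4 by field.
exact: ltrD.
Qed.

Section Compact.
Variable a : R.
Hypothesis a01 : 0 < a <= 1.
Let K := [set x | a <= ulim x].

Lemma K_sub x : K x -> Aset (x, a).
Proof.
move=> Kx; apply/endoE; split => //=; case/andP: a01 => a0 ->.
by rewrite ltW.
Qed.

Lemma cut_compact_step (F : set_system X) : UltraFilter F -> F K ->
  forall δ, 0 < δ -> δ < a -> exists c, F [set x | d c x < δ + δ].
Proof.
move=> UFF FK δ δ0 δa.
have [N hN] := Hconv δ0.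
have [_ h2] := Hend_lt (@U0 N) ulim0 (hN N (leqnn N)).
pose C := [set y | a - δ <= U N y].
have Cc : compact C.
  have ad : 0 < a - δ by rewrite subr_gt0.
  have [_ hc] := UF N; have := hc (a - δ).
  rewrite /Defs.cut (gt_eqF ad); apply; rewrite ad /=.
  case/andP: a01 => _ a1; lra.
have near : forall x, K x -> exists2 y, C y & d x y < δ.
  move=> x Kx; have [[y s] [_ sU] dp] := h2 (x, a) ((endoE _).2 (K_sub Kx)).
  exists y; last by rewrite d_sym; exact: le_lt_trans (d_le_dbar _ _) dp.
  apply: le_trans sU; have := le_lt_trans (dist2_le_dbar _ _) dp.
  by rewrite /= ltr_norml => /andP[h _]; lra.
pose D (S : set X) := [set y | C y /\ exists2 x, (S `&` K) x & d x y < δ].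
pose G := filter_from F D.
have FF : ProperFilter F by exact: ultra_proper.
have GF : Filter G.
  apply: filter_from_filter; first by exists setT; exact: filterT.
  move=> S T FS FT; exists (S `&` T); first exact: filterI.
  move=> y [Cy [x [[Sx Tx] Kx] dxy]]; split; split => //.
    by exists x.
  by exists x.
have GP : ProperFilter G.
  apply: filter_from_proper => S FS.
  have [x [Sx Kx]] := filter_ex (filterI FS FK).
  have [y Cy dxy] := near x Kx; exists y; split => //; exists x => //.
have GC : G C by exists setT; [exact: filterT|move=> y []].
have [c [Cc' cc]] := Cc G GP GC.
exists c.
have [//|FnB] := in_ultra_setVsetC [set x | d c x < δ + δ] UFF.
have GD : G (D (~` [set x | d c x < δ + δ])) by exists (~` [set x | d c x < δ + δ]).
have [y [[Cy [x [nBx Kx] dxy]] bcy]] := cc _ _ GD (nbhsx_ballx c _ δ0).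
exfalso; apply: nBx => /=.
move: bcy; rewrite ballEmdist /= -/(d c y) => bcy.
by apply: le_lt_trans (d_tri c y x) _; rewrite d_sym in dxy; exact: ltrD.
Qed.

Lemma cut_compact : compact K.
Proof.
rewrite compact_ultra => F UFF FK.
have FF : ProperFilter F by exact: ultra_proper.
have a0 : 0 < a by case/andP: a01.
have a2 : 0 < a / 2 by rewrite divr_gt0.
pose δ k := g (a / 2) k.
have δlt : forall k, δ k < a.
  move=> k; apply: le_lt_trans (g_le a2 0 k) _; rewrite g0.
  by rewrite ltr_pdivrMr// ltr_pMr// ltr1n.
have hc k : exists c, F [set x | d c x < δ k + δ k].
  exact: (@cut_compact_step F UFF FK (δ k) (g_gt0 a2 k) (δlt k)).
have [cf hcf] := choice hc.
have cd : forall m n, d (cf m) (cf n) < (δ m + δ m) + (δ n + δ n).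
  move=> m n; have [x [h1 h2]] := filter_ex (filterI (hcf m) (hcf n)).
  apply: le_lt_trans (d_tri _ x _) _; rewrite (d_sym x); exact: ltrD.
have δle : forall K0 m, (K0 <= m)%N -> δ m <= δ K0.
  by move=> K0 m Km; rewrite -(subnKC Km); exact: g_le.
have cC : forall e, 0 < e -> exists N, forall m n, (N <= m)%N -> (N <= n)%N ->
    d (cf m) (cf n) < e.
  move=> e e0; have e4 : 0 < e / 4 by rewrite divr_gt0.
  have [K0 hK0] := g_small a2 e4.
  exists K0 => m n Km Kn; apply: lt_le_trans (cd m n) _.
  have := δle _ _ Km; have := δle _ _ Kn; rewrite /δ in hK0 *; lra.
have [p [_ pl]] := Xc (fun _ => I) cC.
have Fp : forall r, 0 < r -> F [set x | d p x < r].
  move=> r r0; have r4 : 0 < r / 4 by rewrite divr_gt0.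
  have r2 : 0 < r / 2 by rewrite divr_gt0.
  have [K1 h1] := g_small a2 r4.
  have [K2 h2] := pl (r / 2) r2.
  pose k := maxn K1 K2.
  apply: filterS (hcf k) => x /= hx.
  apply: le_lt_trans (d_tri p (cf k) x) _.
  have := h2 k (leq_maxr _ _); rewrite d_sym => hk.
  have := δle _ _ (leq_maxl K1 K2); rewrite -/k /δ in h1 hx * => h3.
  lra.
exists p; split; last first.
  by rewrite /=; apply/metricType_numDomainType.fcvgrPdist_lt => r r0; exact: Fp.
apply: ulim_ub; apply: A_closed; first by case/andP: a01 => ? ?; rewrite /= ltW.
move=> e e0; have [x [hx Kx]] := filter_ex (filterI (Fp e e0) FK).
by exists (x, a); [exact: K_sub|rewrite /dbar /= subrr normr0 addr0].
Qed.
End Compact.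

Lemma ulim_one : exists x, 1 <= ulim x.
Proof.
have almost : forall k, exists x, 1 - g 1 k.+1 <= ulim x.
  move=> k; have [N hN] := LL (g_gt0 (@ltr01 R) k.+1).
  have [[y hy] _] : Defs.cut (U N) 1 !=set0 /\ closed (Defs.cut (U N) 1).
    by case: (UF N) => [[_ h] _]; apply: h; rewrite ler01 lexx.
  move: hy; rewrite /Defs.cut oner_eq0 /= => hy.
  have qe : endo (U N) (y, 1) by split; rewrite //= ler01 lexx.
  have [[z s] Ap dp] := hN N (leqnn N) (y, 1) qe.
  exists z; apply: le_trans (ulim_ub Ap).
  have := dist2_le_dbar (y, 1) (z, s); rewrite ler_norml /= => /andP[h1 h2].
  lra.
have [xs hxs] := choice almost.
have h12 : 0 < (1 / 2 : R) <= 1.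
  by apply/andP; split; [rewrite divr_gt0|rewrite ler_pdivrMr// mul1r ler1n].
have cK := cut_compact h12.
have g1 : forall k, g 1 k.+1 <= (1 / 2 : R).
  by move=> k; have := g_le (@ltr01 R) 1 k; rewrite /g expr1 add1n.
have FK : (xs @ \oo) [set x | 1 / 2 <= ulim x].
  exists 0%N => // k _ /=; apply: le_trans (hxs k); have := g1 k; lra.
have [p [Kp cp]] := cK _ _ FK.
exists p; apply: ulim_ub; apply: A_closed; first by rewrite /= ler01 lexx.
move=> e e0; pose e' := Num.min e 1 / 2.
have e'0 : 0 < e' by rewrite divr_gt0// lt_min e0 ltr01.
have e'1 : e' <= 1 / 2 by rewrite ler_pM2r// ?invr_gt0// ge_min lexx orbT.
have e'e : e' + e' <= e by rewrite -splitr ge_min lexx.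
have [K0 hK0] := g_small (@ltr01 R) e'0.
have FA : (xs @ \oo) [set z | 1 - e' <= ulim z].
  exists K0 => // k /= Kk; apply: le_trans (hxs k).
  have := g_le (@ltr01 R) K0 (k.+1 - K0); rewrite subnKC; last exact: leqW.
  lra.
have [z [Az Bz]] := cp _ _ FA (nbhsx_ballx p _ e'0).
exists (z, 1 - e').
  apply/endoE; split => //=; apply/andP; split; lra.
move: Bz; rewrite ballEmdist /= -/(d p z) => Bz.
rewrite /dbar /=; have -> : (1 : R) - (1 - e') = e' by ring.
rewrite ger0_norm ?ltW//; lra.
Qed.

Lemma ulim_FUSCG : FUSCG ulim.
Proof.
have [x1 hx1] := ulim_one.
split; last first.
  move=> a a01; case/andP: (a01) => a0 _.
  by rewrite /Defs.cut (gt_eqF a0); exact: cut_compact.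
split; first exact: ulim01.
move=> a /andP[a0 a1]; have [->|an] := eqVneq a 0.
  rewrite /Defs.cut eqxx; split; last exact: closed_closure.
  by exists x1; apply: subset_closure; rewrite /= (lt_le_trans ltr01 hx1).
have a0' : 0 < a by rewrite lt_neqAle eq_sym an.
have a01 : 0 < a <= 1 by rewrite a0' a1.
rewrite /Defs.cut (negbTE an); split; first by exists x1; exact: le_trans hx1.
apply: compact_closed; [exact: metric_hausdorff|exact: cut_compact].
Qed.
End Dir1.

Section Dir2.
Context {R : realType} {X : metricType R}.

Definition ind (c : X) : X -> R := fun y => if `[< y = c >] then 1 else 0.

Lemma ind_c c : ind c c = 1.
Proof. by rewrite /ind asboolT. Qed.
Lemma ind_n c y : y <> c -> ind c y = 0.
Proof. by move=> h; rewrite /ind asboolF. Qed.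
Lemma ind_01 c y : 0 <= ind c y <= 1.
Proof. by rewrite /ind; case: ifP => _; rewrite ?lexx ?ler01. Qed.
Lemma ind_pos c y : 0 < ind c y -> y = c.
Proof. by rewrite /ind; case: asboolP => // _; rewrite ltxx. Qed.

Lemma cut_ind c a : 0 < a <= 1 -> Defs.cut (ind c) a = [set c].
Proof.
move=> /andP[a0 a1]; rewrite /Defs.cut gt_eqF//; apply/seteqP; split => y /=.
  by move=> h; apply: ind_pos; exact: lt_le_trans h.
by move=> ->; rewrite ind_c.
Qed.

Lemma ind_FUSCG c : FUSCG (ind c).
Proof.
split; last by move=> a a01; rewrite cut_ind//; exact: compact_set1.
split; first by move=> y; exact: ind_01.
move=> a /andP[a0 a1]; have [->|an0] := eqVneq a 0.
  rewrite /Defs.cut eqxx; split; last exact: closed_closure.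
  by exists c; apply: subset_closure; rewrite /= ind_c ltr01.
have a0' : 0 < a by rewrite lt_neqAle eq_sym an0.
rewrite cut_ind ?a0' //; split; first by exists c.
apply: compact_closed; [exact: metric_hausdorff|exact: compact_set1].
Qed.

Lemma ind_side (c c' : X) p : endo (ind c) p ->
  exists2 q, endo (ind c') q & dbar p q <= d c c'.
Proof.
case=> /andP[p0 p1] pc.
have [e|ne] := pselect (p.1 = c).
  exists (c', p.2); first by rewrite /endo /= ind_c p0 p1.
  by rewrite /dbar /= e subrr normr0 addr0.
exists (p.1, 0); first by apply: endo0; case/andP: (ind_01 c' p.1).
have p20 : p.2 = 0.
  by apply/eqP; rewrite eq_le p0 andbT; move: pc; rewrite ind_n.
by rewrite /dbar /= dxx p20 subrr normr0 addr0 d_ge0.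
Qed.

Lemma dir2 : seq_complete (@FUSCG R X) (@Hend R X) ->
  seq_complete [set: X] (@d R X).
Proof.
move=> H x _ xC.
have w0 : forall n y, 0 <= ind (x n) y by move=> n y; case/andP: (ind_01 (x n) y).
have wC : forall m n, Hend (ind (x m)) (ind (x n)) <= d (x m) (x n).
  move=> m n; apply: Hend_le => //; first exact: d_ge0.
    by move=> p; apply: ind_side.
  move=> q /(ind_side (x m)) [p pe dqp]; exists p => //.
  by rewrite dbar_sym d_sym.
have [l [Fl lC]] : exists l, FUSCG l /\ (forall e : R, 0 < e -> exists N : nat,
    forall n : nat, (N <= n)%N -> Hend (ind (x n)) l < e).
  apply: H; first by move=> n; exact: ind_FUSCG.
  move=> e e0; have [N hN] := xC e e0; exists N => m n Nm Nn.
  exact: le_lt_trans (wC m n) (hN m n Nm Nn).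
case: Fl => [[l01 lcut] _].
have [[y ly] _] : Defs.cut l 1 !=set0 /\ closed (Defs.cut l 1).
  by apply: lcut; rewrite ler01 lexx.
move: ly; rewrite /Defs.cut oner_eq0 /= => ly.
exists y; split => // e e0.
have e10 : 0 < Num.min e 1 by rewrite lt_min e0 ltr01.
have [N hN] := lC _ e10; exists N => n Nn.
have [_ h2] := Hend_lt (w0 n) (fun z => proj1 (andP (l01 z))) (hN n Nn).
have [|p pe dp] := h2 (y, 1); first by rewrite /endo /= ler01 lexx.
have p1 : p.1 = x n.
  apply: ind_pos; case: pe => _; apply: lt_le_trans.
  have := le_lt_trans (dist2_le_dbar _ _) dp; rewrite lt_min => /andP[_].
  by rewrite /= ltr_norml => /andP[h _]; lra.
have := le_lt_trans (d_le_dbar _ _) dp; rewrite lt_min p1 /= => /andP[] //.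
Qed.
End Dir2.

Theorem theorem5p11 (R : realType) (X : metricType R) :
  seq_complete [set: X] (@d R X) <-> seq_complete (@FUSCG R X) (@Hend R X).
Proof.
split; last exact: dir2.
move=> Xc U UF UC; exists (ulim U); split.
  exact: (@ulim_FUSCG R X U UF UC Xc).
exact: (@Hconv R X U UF UC Xc).
Qed.
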